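(* Let $f,g:(0,\infty)\to\mathbb{R}$ be convex functions with $f(1)=g(1)=0$. Then the set of $(f,g)$-achievable points is a convex subset of $\mathbb{R}^2$.
   Context: For a convex function $f:(0,\infty)\to\mathbb{R}$ with $f(1)=0$, set $f(0)=\lim_{t\to0}f(t)$, $f^{\ast}(t)=tf(t^{-1})$ and $f^{\ast}(0)=\lim_{t\to\infty}f(t)/t$. If $P,Q$ are probability measures absolutely continuous with respect to a measure $\mu$ with densities $p=dP/d\mu$, $q=dQ/d\mu$, the $f$-divergence is $D_f(P,Q)=\int_{\{q>0\}} f(p/q)\,dQ+f^{\ast}(0)\,P(q=0)$. A point $(x,y)\in\mathbb{R}^2$ is called $(f,g)$-achievable if there exist probability measures $P,Q$ on some common measurable space ($\sigma$-algebra) such that $(x,y)=(D_f(P,Q),D_g(P,Q))$. *)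

(* Defs.v *)
From HB Require Import structures.
From mathcomp Require Import all_boot all_order all_algebra.
From mathcomp Require Import all_classical all_reals all_analysis.
Set Implicit Arguments. Unset Strict Implicit. Unset Printing Implicit Defensive.
Import Order.TTheory GRing.Theory Num.Theory.
Import numFieldNormedType.Exports.
Local Open Scope classical_set_scope.
Local Open Scope ring_scope.

Section FDiv.
Variable R : realType.

Definition convex_on_pos (f : R -> R) : Prop :=
  forall x y t : R, 0 < x -> 0 < y -> 0 <= t -> t <= 1 ->
    f (t * x + (1 - t) * y) <= t * f x + (1 - t) * f y.

Definition f_at0 (f : R -> R) : \bar R :=
  lim ((fun t => (f t)%:E) @ 0^'+).

Definition fstar_at0 (f : R -> R) : \bar R :=
  lim ((fun t => (f t / t)%:E) @ +oo).

Definition fext (f : R -> R) (t : R) : \bar R :=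
  if 0 < t then (f t)%:E else f_at0 f.

Definition is_density {d} {T : measurableType d}
  (mu : {measure set T -> \bar R}) (P : set T -> \bar R) (p : T -> R) : Prop :=
  [/\ measurable_fun setT p, (forall x, 0 <= p x) &
      forall A, measurable A -> P A = (\int[mu]_(x in A) (p x)%:E)%E].

Definition fdiv (f : R -> R) {d} {T : measurableType d}
  (P Q : probability T R) (p q : T -> R) : \bar R :=
  ((\int[Q]_(x in [set x | (0 < q x)%R]) fext f (p x / q x)%R)
   + fstar_at0 f * P [set x | q x = 0%R])%E.

Definition achievable (f g : R -> R) (xy : R * R) : Prop :=
  exists (d : measure_display) (T : measurableType d)
    (mu : {measure set T -> \bar R}) (P Q : probability T R) (p q : T -> R),
    [/\ is_density mu P p, is_density mu Q q,
        fdiv f P Q p q = xy.1%:E & fdiv g P Q p q = xy.2%:E].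

End FDiv.

(* Main.v *)
Require Import Defs.
From HB Require Import structures.
From mathcomp Require Import all_boot all_order all_algebra.
From mathcomp Require Import all_classical all_reals all_analysis.
From mathcomp Require Import measurable_realfun.
From mathcomp Require Import ring lra.
Import Order.TTheory GRing.Theory Num.Theory.
Local Open Scope classical_set_scope.
Local Open Scope ring_scope.

Section Meas.
Context (R : realType).

Lemma convex_meas (f : R -> R) : convex_on_pos f -> measurable_fun [set x : R | 0 < x] f.
Proof.
move=> cf.
apply: (measurability _ (RGenInftyO.measurableE R)) => //.
move=> _ [_ [a ->] <-].
apply: is_interval_measurable => x y [/= x0 fx] [/= y0 fy] z /andP[xz zy].
move: fx fy; rewrite /= !in_itv /= => fx fy.
have z0 : 0 < z by exact: lt_le_trans xz.
split => //=.
have [xy|xy] := eqVneq x y.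
  by have -> : z = x by apply/eqP; rewrite eq_le xz; rewrite xy in xz *; rewrite zy.
have lxy : x < y by rewrite lt_neqAle xy (le_trans xz zy).
pose l := (y - z) / (y - x).
have yx0 : y - x != 0 by rewrite subr_eq0 eq_sym.
have hz : z = l * x + (1 - l) * y by rewrite /l; field.
have l0 : 0 <= l by rewrite /l divr_ge0 // subr_ge0 // ltW.
have l1 : l <= 1.
  rewrite /l ler_pdivrMr ?subr_gt0 // mul1r; lra.
have := cf x y l x0 y0 l0 l1; rewrite -hz => H.
apply: (le_lt_trans H).
have [fxy|fxy] := lerP (f x) (f y).
  have : l * f x <= l * f y by rewrite ler_wpM2l.
  lra.
have : (1 - l) * f y <= (1 - l) * f x by rewrite ler_wpM2l ?subr_ge0 // ltW.
lra.
Qed.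

Lemma measurable_inv : measurable_fun [set: R] (@GRing.inv R).
Proof.
rewrite (_ : GRing.inv = fun x : R => if x == 0 then 0 else x^-1); last first.
  by apply/funext => x; case: eqP => // ->; rewrite invr0.
apply: measurable_fun_if => //.
  exact: measurable_fun_eqr.
rewrite (_ : _ `&` _ = [set x | x != 0]); last first.
  by apply/seteqP; split => x /=; [case => _; move/negbT|move=> /negbTE ->].
apply: open_continuous_measurable_fun; first exact: open_neq.
by move=> x; rewrite inE => x0; exact: inv_continuous.
Qed.

Lemma fext_meas (f : R -> R) : convex_on_pos f -> measurable_fun [set: R] (fext f).
Proof.
move=> cf; rewrite /fext; apply: measurable_fun_if => //.
  exact: measurable_fun_ltr.
rewrite (_ : _ `&` _ = [set x | 0 < x]); last first.
  by apply/seteqP; split => x /=; [case|].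
apply: measurableT_comp => //; exact: convex_meas.
Qed.
End Meas.

Section Ar.
Context (R : realType).
Local Open Scope ereal_scope.

Lemma fin3 (A B X : \bar R) (a : R) : 0 <= A -> 0 <= B -> A - B + X = a%:E ->
  exists a' b' x', [/\ A = a'%:E, B = b'%:E & X = x'%:E].
Proof.
by move: A B X => [a'| |] [b'| |] [x'| |] //= *; exists a', b', x'.
Qed.

Lemma arith (t s : R) (A1 B1 A2 B2 E1 E2 c : \bar R) (a1 a2 : R) :
  (0 < t)%R -> (0 < s)%R -> 0 <= A1 -> 0 <= B1 -> 0 <= A2 -> 0 <= B2 ->
  0 <= E1 -> 0 <= E2 ->
  A1 - B1 + c * E1 = a1%:E -> A2 - B2 + c * E2 = a2%:E ->
  (t%:E * A1 + s%:E * A2) - (t%:E * B1 + s%:E * B2) + c * (t%:E * E1 + s%:E * E2)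
   = (t * a1 + s * a2)%:E.
Proof.
move=> t0 s0 A10 B10 A20 B20 E10 E20 h1 h2.
rewrite ge0_muleDr ?mule_ge0 ?lee_fin ?(ltW t0) ?(ltW s0) //.
rewrite (muleCA c t%:E) (muleCA c s%:E).
have [a1' [b1' [x1' [eA1 eB1 e1]]]] := fin3 _ _ _ _ A10 B10 h1.
have [a2' [b2' [x2' [eA2 eB2 e2]]]] := fin3 _ _ _ _ A20 B20 h2.
move: h1 h2; rewrite eA1 eB1 eA2 eB2 e1 e2 => h1 h2.
rewrite -!EFinM -!EFinD; congr EFin.
move: h1 h2; rewrite -!EFinN -!EFinD => -[h1] [h2]; rewrite -h1 -h2; ring.
Qed.
End Ar.

Section Mix.
Context (R : realType) d1 d2 (T1 : measurableType d1) (T2 : measurableType d2).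
Definition inj1 (x : T1) : (T1 * T2 * bool)%type := ((x, point), true).
Definition inj2 (y : T2) : (T1 * T2 * bool)%type := ((point, y), false).
Lemma minj1 : measurable_fun setT inj1.
Proof. by apply: measurable_fun_pair => //; apply: measurable_fun_pair. Qed.
Lemma minj2 : measurable_fun setT inj2.
Proof. by apply: measurable_fun_pair => //; apply: measurable_fun_pair. Qed.

Definition pf1 (m : {measure set T1 -> \bar R}) : {measure set (T1 * T2 * bool) -> \bar R}.
refine (pushforward m inj1 : {measure set _ -> \bar R}). exact: minj1. Defined.
Definition pf2 (m : {measure set T2 -> \bar R}) : {measure set (T1 * T2 * bool) -> \bar R}.
refine (pushforward m inj2 : {measure set _ -> \bar R}). exact: minj2. Defined.

Lemma pf1E m A : pf1 m A = m (inj1 @^-1` A). Proof. by []. Qed.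

Definition mixm (t s : {nonneg R}) m1 m2 : {measure set (T1 * T2 * bool) -> \bar R} :=
  measure_add (mscale t (pf1 m1)) (mscale s (pf2 m2)).

Lemma mixmE t s m1 m2 A : mixm t s m1 m2 A =
  (t%:num%:E * m1 (inj1 @^-1` A) + s%:num%:E * m2 (inj2 @^-1` A))%E.
Proof. exact: measure_addE. Qed.

Definition mixf t s m1 m2 := (mixm t s m1 m2 : set _ -> \bar R).
HB.instance Definition _ t s m1 m2 := Measure.copy (mixf t s m1 m2) (mixm t s m1 m2).

Lemma mixf1 (t s : {nonneg R}) (ht : t%:num + s%:num = 1) (P1 : probability T1 R) (P2 : probability T2 R) :
  mixf t s P1 P2 setT = 1%E.
Proof. rewrite /mixf mixmE !preimage_setT. rewrite (_ : (P1 : {measure set T1 -> \bar R}) setT = 1%E); last exact: probability_setT. rewrite (_ : (P2 : {measure set T2 -> \bar R}) setT = 1%E); last exact: probability_setT. rewrite !mule1 -EFinD ht. done. Qed.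

Definition mixp (t s : {nonneg R}) (ht : t%:num + s%:num = 1) (P1 : probability T1 R) (P2 : probability T2 R) : probability (T1 * T2 * bool)%type R :=
  HB.pack (mixf t s P1 P2) (Measure_isProbability.Build _ _ _ (mixf t s P1 P2) (@mixf1 t s ht P1 P2)).

Lemma mixpE t s ht P1 P2 A : mixp t s ht P1 P2 A =
  (t%:num%:E * P1 (inj1 @^-1` A) + s%:num%:E * P2 (inj2 @^-1` A))%E.
Proof. exact: mixmE. Qed.
Local Open Scope ereal_scope.
Lemma int_mix (t s : {nonneg R}) (m1 : {measure set T1 -> \bar R}) (m2 : {measure set T2 -> \bar R}) (D : set (T1 * T2 * bool)) (G : T1 * T2 * bool -> \bar R) :
  measurable D -> measurable_fun [set: (T1 * T2 * bool)%type] G -> (forall x, 0 <= G x) ->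
  \int[mixm t s m1 m2]_(x in D) G x =
  t%:num%:E * \int[m1]_(x in inj1 @^-1` D) G (inj1 x) +
  s%:num%:E * \int[m2]_(x in inj2 @^-1` D) G (inj2 x).
Proof.
move=> mD mG G0.
have mGD : measurable_fun D G by exact: measurable_funTS.
rewrite /mixm ge0_integral_measure_add //. all: try by move=> x _; exact: G0.
rewrite !ge0_integral_mscale //. all: try by move=> x _; exact: G0.
congr (_ * _ + _ * _).
  exact: (ge0_integral_pushforward minj1).
exact: (ge0_integral_pushforward minj2).
Qed.

Local Open Scope ring_scope.
Definition pmix (t s : R) (p1 : T1 -> R) (p2 : T2 -> R) (z : (T1 * T2 * bool)%type) : R :=
  if z.2 then t * p1 z.1.1 else s * p2 z.1.2.

Lemma pmix_meas t s p1 p2 : measurable_fun setT p1 -> measurable_fun setT p2 ->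
  measurable_fun setT (pmix t s p1 p2).
Proof.
move=> mp1 mp2; apply: measurable_fun_ifT.
- exact: measurable_snd.
- apply: measurableT_comp; first exact: mulrl_measurable.
  apply: measurableT_comp => //; apply: measurableT_comp; exact: measurable_fst.
- apply: measurableT_comp; first exact: mulrl_measurable.
  apply: measurableT_comp => //; apply: measurableT_comp; [exact: measurable_snd|exact: measurable_fst].
Qed.

Lemma dens_mix (t s : {nonneg R}) ht (mu1 : {measure set T1 -> \bar R})
  (mu2 : {measure set T2 -> \bar R}) (P1 : probability T1 R) (P2 : probability T2 R) p1 p2 :
  is_density mu1 P1 p1 -> is_density mu2 P2 p2 ->
  is_density (mixm 1%:nng 1%:nng mu1 mu2) (mixp t s ht P1 P2) (pmix t%:num s%:num p1 p2).
Proof.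
move=> [mp1 p10 dd1] [mp2 p20 dd2]; split.
- exact: pmix_meas.
- by case=> [[x y] []] /=; rewrite mulr_ge0.
- move=> A mA; rewrite int_mix //; last 2 first.
  + by apply: measurableT_comp => //; exact: pmix_meas.
  + by case=> [[x y] []]; rewrite lee_fin /= mulr_ge0.
  rewrite mixpE /= !mul1e.
  have mA1 : measurable (inj1 @^-1` A) by rewrite -(setTI (_ @^-1` _)); exact: minj1.
  have mA2 : measurable (inj2 @^-1` A) by rewrite -(setTI (_ @^-1` _)); exact: minj2.
  rewrite dd1 // dd2 //. rewrite /pmix /=.
  under [in RHS]eq_integral do rewrite EFinM.
  rewrite ge0_integralZl_EFin //; last by apply: measurableT_comp => //; exact: measurable_funTS.
  under [X in _ = _ + X]eq_integral do rewrite EFinM.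
  rewrite ge0_integralZl_EFin //; last by apply: measurableT_comp => //; exact: measurable_funTS.
  all: by move=> x _; rewrite lee_fin.
Qed.

Lemma fdiv_mix (f : R -> R) (cf : convex_on_pos f) (t s : {nonneg R}) ht
  (t0 : 0 < t%:num) (s0 : 0 < s%:num) (P1 Q1 : probability T1 R) (P2 Q2 : probability T2 R)
  (p1 q1 : T1 -> R) (p2 q2 : T2 -> R) :
  measurable_fun setT p1 -> measurable_fun setT q1 ->
  measurable_fun setT p2 -> measurable_fun setT q2 ->
  fdiv f (mixp t s ht P1 P2) (mixp t s ht Q1 Q2) (pmix t%:num s%:num p1 p2) (pmix t%:num s%:num q1 q2) =
  ((t%:num%:E * \int[Q1]_(x in [set x | (0 < q1 x)%R]) (fun x => fext f (p1 x / q1 x)%R)^\+ x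
   + s%:num%:E * \int[Q2]_(x in [set x | (0 < q2 x)%R]) (fun x => fext f (p2 x / q2 x)%R)^\+ x)
  - (t%:num%:E * \int[Q1]_(x in [set x | (0 < q1 x)%R]) (fun x => fext f (p1 x / q1 x)%R)^\- x
   + s%:num%:E * \int[Q2]_(x in [set x | (0 < q2 x)%R]) (fun x => fext f (p2 x / q2 x)%R)^\- x)
  + fstar_at0 f * (t%:num%:E * P1 [set x | q1 x = 0%R] + s%:num%:E * P2 [set x | q2 x = 0%R]))%E.
Proof.
move=> mp1 mq1 mp2 mq2.
have mp := pmix_meas t%:num s%:num _ _ mp1 mp2.
have mq := pmix_meas t%:num s%:num _ _ mq1 mq2.
have mF : measurable_fun setT (fun z => fext f (pmix t%:num s%:num p1 p2 z / pmix t%:num s%:num q1 q2 z)).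
  apply: measurableT_comp; first exact: fext_meas.
  exact: (measurable_funM mp (measurableT_comp (measurable_inv R) mq)).
have mD : measurable [set z | 0 < pmix t%:num s%:num q1 q2 z].
  rewrite (_ : [set z | _] = setT `&` (pmix t%:num s%:num q1 q2) @^-1` `]0, +oo[); last first.
    apply/seteqP; split => z /=; first by move=> h; split => //; rewrite in_itv /= andbT.
    by case=> _; rewrite in_itv /= andbT.
  by apply: mq => //; exact: measurable_itv.
have e_div (c : R) a b : 0 < c -> (c * a) / (c * b) = a / b.
  by move=> c0; rewrite invfM mulrACA divff ?mul1r // gt_eqF.
have pre1 : inj1 @^-1` [set z | 0 < pmix t%:num s%:num q1 q2 z] = [set x | 0 < q1 x].
  by apply/seteqP; split => x; rewrite /pmix /=; rewrite pmulr_rgt0.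
have pre2 : inj2 @^-1` [set z | 0 < pmix t%:num s%:num q1 q2 z] = [set x | 0 < q2 x].
  by apply/seteqP; split => x; rewrite /pmix /=; rewrite pmulr_rgt0.
have z1 : inj1 @^-1` [set z | pmix t%:num s%:num q1 q2 z = 0] = [set x | q1 x = 0].
  apply/seteqP; split => x; rewrite /pmix /=; last by move=> ->; rewrite mulr0.
  by move/eqP; rewrite mulf_eq0 (gt_eqF t0) /= => /eqP.
have z2 : inj2 @^-1` [set z | pmix t%:num s%:num q1 q2 z = 0] = [set x | q2 x = 0].
  apply/seteqP; split => x; rewrite /pmix /=; last by move=> ->; rewrite mulr0.
  by move/eqP; rewrite mulf_eq0 (gt_eqF s0) /= => /eqP.
have intQ (G : (T1 * T2 * bool)%type -> \bar R) : measurable_fun setT G -> (forall x, (0 <= G x)%E) ->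
   (\int[mixp t s ht Q1 Q2]_(x in [set z | (0 < pmix t%:num s%:num q1 q2 z)%R]) G x =
   t%:num%:E * \int[Q1]_(x in inj1 @^-1` [set z | (0 < pmix t%:num s%:num q1 q2 z)%R]) G (inj1 x) +
   s%:num%:E * \int[Q2]_(x in inj2 @^-1` [set z | (0 < pmix t%:num s%:num q1 q2 z)%R]) G (inj2 x))%E.
  move=> mG G0; rewrite -(int_mix t s Q1 Q2 _ _ mD mG G0); reflexivity.
rewrite /fdiv integralE !intQ //; last 2 first.
- exact: measurable_funeneg.
- exact: measurable_funepos.
rewrite pre1 pre2 mixpE z1 z2.
congr (((_ * _ + _ * _) - (_ * _ + _ * _)) + _ * _)%E.
- by apply: eq_integral => x _; rewrite !funeposE /pmix /= e_div.
- by apply: eq_integral => x _; rewrite !funeposE /pmix /= e_div.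
- by apply: eq_integral => x _; rewrite !funenegE /pmix /= e_div.
- by apply: eq_integral => x _; rewrite !funenegE /pmix /= e_div.
Qed.
End Mix.

Arguments mixm {R d1 d2 T1 T2}.
Arguments mixp {R d1 d2 T1 T2}.
Arguments pmix {R d1 d2 T1 T2}.
Arguments arith {R t s A1 B1 A2 B2 E1 E2 c a1 a2}.

Theorem theorem1 (R : realType) (f g : R -> R) :
  convex_on_pos f -> convex_on_pos g -> f 1 = 0 -> g 1 = 0 ->
  forall (a b : R * R) (t : R), 0 <= t -> t <= 1 ->
    achievable f g a -> achievable f g b ->
    achievable f g (t * a.1 + (1 - t) * b.1, t * a.2 + (1 - t) * b.2).
Proof.
move=> cf cg f10 g10 a b t t0 t1
  [d1 [T1 [mu1 [P1 [Q1 [p1 [q1 [dP1 dQ1 ef1 eg1]]]]]]]]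
  [d2 [T2 [mu2 [P2 [Q2 [p2 [q2 [dP2 dQ2 ef2 eg2]]]]]]]].
have [->|tn0] := eqVneq t 0.
  rewrite !mul0r !add0r subr0 !mul1r.
  by exists d2, T2, mu2, P2, Q2, p2, q2; split.
have [->|tn1] := eqVneq t 1.
  rewrite subrr !mul0r !addr0 !mul1r.
  by exists d1, T1, mu1, P1, Q1, p1, q1; split.
have t0' : 0 < t by rewrite lt_neqAle eq_sym tn0 t0.
have s0 : 0 < 1 - t by rewrite subr_gt0 lt_neqAle tn1 t1.
pose tn := NngNum (ltW t0'). pose sn := NngNum (ltW s0).
have ht : tn%:num + sn%:num = 1 by rewrite /= addrC subrK.
have [mp1 _ _] := dP1. have [mq1 _ _] := dQ1.
have [mp2 _ _] := dP2. have [mq2 _ _] := dQ2.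
exists _, _, (mixm 1%:nng 1%:nng mu1 mu2), (mixp tn sn ht P1 P2), (mixp tn sn ht Q1 Q2),
  (pmix tn%:num sn%:num p1 p2), (pmix tn%:num sn%:num q1 q2).
split.
- exact: (@dens_mix R _ _ T1 T2 tn sn ht mu1 mu2 P1 P2 p1 p2 dP1 dP2).
- exact: (@dens_mix R _ _ T1 T2 tn sn ht mu1 mu2 Q1 Q2 q1 q2 dQ1 dQ2).
- have := (@fdiv_mix R _ _ T1 T2 f cf tn sn ht t0' s0 P1 Q1 P2 Q2 p1 q1 p2 q2 mp1 mq1 mp2 mq2).
  move=> ->.
  move: ef1 ef2; rewrite /fdiv integralE => ef1; rewrite integralE => ef2.
  apply: (arith t0' s0 _ _ _ _ _ _ ef1 ef2).
  all: try (apply: integral_ge0 => x _; first [exact: funepos_ge0 | exact: funeneg_ge0]).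
  exact: (measure_ge0 P1 _).
  exact: (measure_ge0 P2 _).
- have := (@fdiv_mix R _ _ T1 T2 g cg tn sn ht t0' s0 P1 Q1 P2 Q2 p1 q1 p2 q2 mp1 mq1 mp2 mq2).
  move=> ->.
  move: eg1 eg2; rewrite /fdiv integralE => eg1; rewrite integralE => eg2.
  apply: (arith t0' s0 _ _ _ _ _ _ eg1 eg2).
  all: try (apply: integral_ge0 => x _; first [exact: funepos_ge0 | exact: funeneg_ge0]).
  exact: (measure_ge0 P1 _).
  exact: (measure_ge0 P2 _).
Qed.
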